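(* Let $A=\begin{pmatrix}3&2&1&0\\2&3&2&1\\1&2&2&1\\0&1&1&1\end{pmatrix}$ and $f(x)=x^\top A x$ for $x\in\mathbb{Z}^4$. Then $f$ is multimodular, but its projection to $U=\{1,2,4\}$, namely $f^U(y_1,y_2,y_4)=\inf_{z\in\mathbb{Z}} f(y_1,y_2,z,y_4)$, regarded as a function of $(y_1,y_2,y_4)\in\mathbb{Z}^3$ in this order, is finite everywhere and is not multimodular. In particular, the projection of a multimodular function to a non-interval subset of variables need not be multimodular.
   Context: For $f:\mathbb{Z}^n\to\mathbb{R}\cup\{+\infty\}$, $\mathrm{dom}\, f=\{x\in\mathbb{Z}^n: f(x)<+\infty\}$. Let $e_i$ denote the $i$-th unit vector of $\mathbb{Z}^n$ and $\mathcal{F}=\{-e_1,\ e_1-e_2,\ e_2-e_3,\ \dots,\ e_{n-1}-e_n,\ e_n\}$. A function $f:\mathbb{Z}^n\to\mathbb{R}\cup\{+\infty\}$ is called multimodular if $\mathrm{dom}\, f\neq\emptyset$ and $f(z+d)+f(z+d')\ge f(z)+f(z+d+d')$ for all $z\in\mathrm{dom}\, f$ and all distinct $d,d'\in\mathcal{F}$ (with the usual conventions for $+\infty$). *)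

(* Defs.v *)
From Stdlib Require Import ZArith Reals.
From mathcomp Require Import all_boot.

Set Implicit Arguments.
Unset Strict Implicit.
Unset Printing Implicit Defensive.

Definition zvec (n : nat) := 'I_n -> Z.

(* extended reals R ∪ {+oo}: None = +oo *)
Definition ereal := option R.

Definition eadd (a b : ereal) : ereal :=
  match a, b with Some x, Some y => Some (Rplus x y) | _, _ => None end.

Definition ege (a b : ereal) : Prop :=
  match a, b with
  | _, None => a = None
  | None, Some _ => True
  | Some x, Some y => Rge x y
  end.

Definition dom (n : nat) (f : zvec n -> ereal) (x : zvec n) : Prop := f x <> None.

(* unit vector e_{k+1} (0-based index k); zero if k >= n *)
Definition unitv (n k : nat) : zvec n :=
  fun j => if nat_of_ord j == k then 1%Z else 0%Z.

Arguments unitv : clear implicits.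
Definition vadd n (x y : zvec n) : zvec n := fun j => (x j + y j)%Z.
Definition vsub n (x y : zvec n) : zvec n := fun j => (x j - y j)%Z.
Definition vopp n (x : zvec n) : zvec n := fun j => (- x j)%Z.

(* The family F = {-e_1, e_1-e_2, ..., e_{n-1}-e_n, e_n}, indexed by k = 0..n:
   k = 0 : -e_1 ;  1 <= k <= n-1 : e_k - e_{k+1} ;  k = n : e_n
   (with 1-based e as in the paper; unitv is 0-based). *)
Definition Fdir (n k : nat) : zvec n :=
  if k == 0 then vopp (unitv n 0)
  else if k == n then unitv n (n - 1)
  else vsub (unitv n (k - 1)) (unitv n k).

Arguments Fdir : clear implicits.
(* multimodularity; for n >= 1 the directions Fdir n k (k <= n) are pairwise
   distinct, so "distinct d, d' in F" = "distinct indices k, k' <= n". *)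
Definition multimodular (n : nat) (f : zvec n -> ereal) : Prop :=
  (exists x, dom f x) /\
  forall (z : zvec n) (k k' : nat), dom f z -> k <= n -> k' <= n -> k <> k' ->
    ege (eadd (f (vadd z (Fdir n k))) (f (vadd z (Fdir n k'))))
        (eadd (f z) (f (vadd (vadd z (Fdir n k)) (Fdir n k')))).

Definition is_inf (S : R -> Prop) (m : R) : Prop :=
  (forall r, S r -> Rle m r) /\
  (forall m', (forall r, S r -> Rle m' r) -> Rle m' m).

Definition Amat (i j : nat) : Z :=
  match i, j with
  | 0, 0 => 3%Z | 0, 1 => 2%Z | 0, 2 => 1%Z | 0, 3 => 0%Z
  | 1, 0 => 2%Z | 1, 1 => 3%Z | 1, 2 => 2%Z | 1, 3 => 1%Z
  | 2, 0 => 1%Z | 2, 1 => 2%Z | 2, 2 => 2%Z | 2, 3 => 1%Z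
  | 3, 0 => 0%Z | 3, 1 => 1%Z | 3, 2 => 1%Z | 3, 3 => 1%Z
  | _, _ => 0%Z
  end.

Definition coord4 (x : zvec 4) (k : nat) : Z := x (@inord 3 k).

Definition fA (x : zvec 4) : ereal :=
  Some (IZR (foldr Z.add 0%Z
    [seq (Amat i j * coord4 x i * coord4 x j)%Z | i <- iota 0 4, j <- iota 0 4])).

Definition ext124 (y : zvec 3) (z : Z) : zvec 4 :=
  fun j => match nat_of_ord j with
           | 0 => y (@inord 2 0)
           | 1 => y (@inord 2 1)
           | 2 => z
           | _ => y (@inord 2 2)
           end.

(* Main.v *)
Require Import Defs.
From Stdlib Require Import ZArith Reals Lia Psatz.
From mathcomp Require Import all_boot.

Lemma io3 i : i < 4 -> nat_of_ord (@inord 3 i) = i.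
Proof. by move=> h; rewrite inordK. Qed.
Lemma io2 i : i < 3 -> nat_of_ord (@inord 2 i) = i.
Proof. by move=> h; rewrite inordK. Qed.

Definition PZ (a b c d : Z) : Z :=
  (3*a*a+3*b*b+2*c*c+d*d+2*(2*a*b+a*c+2*b*c+b*d+c*d))%Z.

Lemma fA_eq x : fA x = Some (IZR (PZ (x (@inord 3 0)) (x (@inord 3 1)) (x (@inord 3 2)) (x (@inord 3 3)))).
Proof. rewrite /fA /coord4; cbn -[Z.mul Z.add]; f_equal; f_equal; rewrite /PZ; ring. Qed.

Lemma key (s c : Z) : (2*c*c + 2*c*s + (s*s)/2 >= 0)%Z.
Proof.
have Hd := Z.div_mod s 2 ltac:(lia); have Hb := Z.mod_pos_bound s 2 ltac:(lia).
move: Hd Hb; move: (s / 2)%Z (s mod 2)%Z => q r Hd Hb.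
have Hr : (r = 0 \/ r = 1)%Z by lia.
have -> : (s*s/2 = 2*q*q+2*q*r)%Z.
  rewrite Hd; case: Hr => ->.
  - symmetry; apply Z.div_unique_pos with 0%Z; lia.
  - symmetry; apply Z.div_unique_pos with 1%Z; lia.
rewrite Hd; case: Hr => ->.
- have := Z.square_nonneg (c+q); nia.
- have : (0 <= (c+q)*(c+q+1))%Z.
    case: (Z.le_gt_cases 0 (c+q)) => h; nia.
  nia.
Qed.

Lemma fA_mm : multimodular fA.
Proof.
split; first by exists (fun _ => 0%Z); rewrite /dom fA_eq.
move=> z k k' _ hk hk' hne.
case: k hk hne => [|[|[|[|[|k]]]]] // _;
case: k' hk' => [|[|[|[|[|k']]]]] // _ hne; try by case: hne.
all: rewrite !fA_eq /vadd /Fdir /vopp /vsub /unitv /= !io3 //=.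
all: rewrite -!plus_IZR; apply IZR_ge; rewrite /PZ; nia.
Qed.

Definition gZ (a b d : Z) : Z :=
  (3*a*a+3*b*b+d*d+4*a*b+2*b*d - ((a+2*b+d)*(a+2*b+d)) / 2)%Z.

Definition g (y : zvec 3) : R := IZR (gZ (y (@inord 2 0)) (y (@inord 2 1)) (y (@inord 2 2))).

Lemma PZ_ge a b c d : (gZ a b d <= PZ a b c d)%Z.
Proof. have := key (a+2*b+d) c; rewrite /PZ /gZ; nia. Qed.

Lemma PZ_att a b d : PZ a b (- ((a+2*b+d)/2)) d = gZ a b d.
Proof.
rewrite /gZ; set s := (a+2*b+d)%Z.
have Hd := Z.div_mod s 2 ltac:(lia); have Hb := Z.mod_pos_bound s 2 ltac:(lia).
move: Hd Hb; move: (s / 2)%Z (s mod 2)%Z => q r Hd Hb.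
have Hr : (r = 0 \/ r = 1)%Z by lia.
have -> : (s*s/2 = 2*q*q+2*q*r)%Z.
  rewrite Hd; case: Hr => ->.
  - symmetry; apply Z.div_unique_pos with 0%Z; lia.
  - symmetry; apply Z.div_unique_pos with 1%Z; lia.
rewrite /PZ.
have Ha : a = (s - 2*b - d)%Z by rewrite /s; ring.
rewrite Ha Hd; case: Hr => ->; ring.
Qed.

Lemma ext_eq y z : fA (ext124 y z) = Some (IZR (PZ (y (@inord 2 0)) (y (@inord 2 1)) z (y (@inord 2 2)))).
Proof. by rewrite fA_eq /ext124 !io3. Qed.

Theorem mainTheorem10 :
  multimodular fA /\
  exists g : zvec 3 -> R,
    (forall y : zvec 3, is_inf (fun r => exists z : Z, fA (ext124 y z) = Some r) (g y)) /\
    ~ multimodular (fun y : zvec 3 => Some (g y)).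
Proof.
split; first exact: fA_mm.
exists g; split.
  move=> y; split.
    move=> r [c]; rewrite ext_eq => -[<-]; apply IZR_le; exact: PZ_ge.
  move=> m' Hm; apply Hm.
  exists (- ((y (@inord 2 0) + 2 * y (@inord 2 1) + y (@inord 2 2)) / 2))%Z.
  by rewrite ext_eq PZ_att.
move=> [_ H].
have := H (unitv 3 2) 0 3 ltac:(discriminate) isT isT ltac:(discriminate).
rewrite /g /vadd /Fdir /vopp /vsub /unitv /= !io2 //=.
rewrite -!plus_IZR => /Rge_le /le_IZR.
by compute.
Qed.
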